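(* Let $(R,\mathfrak{m})$ satisfy condition $\bigstar$ with residue field $\mathbb{F}_q$, and let $V=\mathfrak{m}/(\mathfrak{m}^2+pR)$, an $\mathbb{F}_q$-vector space. Assume $V\neq 0$. Then there is a bijection between the codimension-one $\mathbb{F}_q$-subspaces $W$ of $V$ and the maximal subrings $S$ of $R$ having the same residue field as $R$, given by $S\mapsto \mathfrak{m}_S/(\mathfrak{m}^2+pR)$, with inverse $W\mapsto \bar{T}(R)+I_W$, where $I_W$ is the ideal of $R$ with $\mathfrak{m}^2+pR\subseteq I_W\subseteq\mathfrak{m}$ and $I_W/(\mathfrak{m}^2+pR)=W$.
   Context: All rings are commutative and unital. Condition $\bigstar$ on a ring $(R,\mathfrak{m})$: $R$ is a local ring (unique maximal ideal $\mathfrak{m}$, not necessarily Noetherian) of characteristic $p^N$ for a prime $p$ and some $N\ge 1$, with finite residue field $R/\mathfrak{m}\cong\mathbb{F}_q$, and $\mathfrak{m}$ is a nilpotent ideal. $T(R)$ is the unique subgroup of $R^\times$ mapping isomorphically onto $\mathbb{F}_q^\times$ under reduction mod $\mathfrak{m}$, and $\bar{T}(R)=T(R)\cup\{0\}$. $V$ is an $R/\mathfrak{m}$-vector space since it is an $R$-module annihilated by $\mathfrak{m}$. A subring $S$ is local with $\mathfrak{m}_S=\mathfrak{m}\cap S$, and its residue field is naturally a subfield of $R/\mathfrak{m}$; a ''maximal subring with the same residue field as $R$'' is a proper subring with residue field $\mathbb{F}_q$ not properly contained in any other proper subring of $R$. *)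

(* Defs.v *)
From HB Require Import structures.
From mathcomp Require Import all_boot all_order all_algebra.
Set Implicit Arguments. Unset Strict Implicit. Unset Printing Implicit Defensive.
Import GRing.Theory.
Local Open Scope ring_scope.

Section Defs.
Variable R : comNzRingType.

Definition subsetR (A B : R -> Prop) : Prop := forall x, A x -> B x.
Definition eqsetR (A B : R -> Prop) : Prop := forall x, A x <-> B x.

Definition is_unit (x : R) : Prop := exists y, x * y = 1.

Definition is_ideal (I : R -> Prop) : Prop :=
  [/\ I 0, (forall x y, I x -> I y -> I (x + y)) & (forall r x, I x -> I (r * x))].

Definition is_maximal_ideal (M : R -> Prop) : Prop :=
  [/\ is_ideal M, ~ M 1 &
      forall J, is_ideal J -> ~ J 1 -> subsetR M J -> subsetR J M].

Definition is_local (m : R -> Prop) : Prop :=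
  is_maximal_ideal m /\ forall M, is_maximal_ideal M -> eqsetR M m.

Definition has_char (n : nat) : Prop := forall k : nat, (k%:R == 0 :> R) <-> (n %| k)%N.

(* R/m is finite with exactly q elements: a complete irredundant system of
   representatives of R modulo m has q elements *)
Definition residue_card (m : R -> Prop) (q : nat) : Prop :=
  exists s : seq R, [/\ size s = q,
    (forall i j, (i < q)%N -> (j < q)%N -> m (s`_i - s`_j) -> i = j) &
    (forall x, exists2 i, (i < q)%N & m (x - s`_i))].

Definition nilpotent_ideal (m : R -> Prop) : Prop :=
  exists n : nat, forall s : seq R, size s = n -> (forall x, x \in s -> m x) ->
    \prod_(x <- s) x = 0.

Definition cond_star (m : R -> Prop) (p q : nat) : Prop :=
  [/\ is_local m, prime p, (exists2 N, (1 <= N)%N & has_char (p ^ N)),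
      residue_card m q & nilpotent_ideal m].

Definition m2pR (m : R -> Prop) (p : nat) : R -> Prop := fun x =>
  exists (s : seq (R * R)) (r : R),
    (forall ab, ab \in s -> m ab.1 /\ m ab.2) /\
    x = \sum_(ab <- s) ab.1 * ab.2 + p%:R * r.

(* Teichmüller subgroup: a subgroup of R^x mapping isomorphically onto
   (R/m)^x under reduction mod m *)
Definition is_teich (m : R -> Prop) (T : R -> Prop) : Prop :=
  [/\ subsetR T is_unit, T 1, (forall x y, T x -> T y -> T (x * y)),
      (forall x, T x -> exists2 y, T y & x * y = 1) &
      (forall x, ~ m x -> exists t, (T t /\ m (x - t)) /\
                          forall t', T t' -> m (x - t') -> t' = t)].

Definition Tbar (T : R -> Prop) : R -> Prop := fun x => T x \/ x = 0.

Definition is_subring (S : R -> Prop) : Prop :=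
  [/\ S 1, (forall x y, S x -> S y -> S (x - y)) & (forall x y, S x -> S y -> S (x * y))].

Definition proper_subring (S : R -> Prop) : Prop :=
  is_subring S /\ exists x, ~ S x.

(* residue field of S (= S/(m ∩ S), a subfield of R/m) is all of R/m *)
Definition same_residue_field (m S : R -> Prop) : Prop :=
  forall x, exists2 s, S s & m (x - s).

Definition maximal_subring_same_residue (m S : R -> Prop) : Prop :=
  [/\ proper_subring S, same_residue_field m S &
      forall S', proper_subring S' -> subsetR S S' -> subsetR S' S].

(* Codimension-one F_q-subspaces W of V = m/(m^2+pR), represented by their
   preimage I_W: ideals with m^2+pR ⊆ I ⊆ m and dim_{R/m} (m/I) = 1. *)
Definition codim1_ideal (m : R -> Prop) (p : nat) (I : R -> Prop) : Prop :=
  [/\ is_ideal I, subsetR (m2pR m p) I, subsetR I m &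
      exists x0, [/\ m x0, ~ I x0 &
        forall x, m x -> exists r i, I i /\ x = r * x0 + i]].

(* S |-> m_S/(m^2+pR), represented by its preimage (m ∩ S) + (m^2+pR) *)
Definition phi_map (m : R -> Prop) (p : nat) (S : R -> Prop) : R -> Prop :=
  fun x => exists s j, [/\ m s, S s, m2pR m p j & x = s + j].

Definition psi_map (T I : R -> Prop) : R -> Prop :=
  fun x => exists t i, [/\ Tbar T t, I i & x = t + i].

End Defs.

(* Main.v *)
Set Warnings "-notation-overridden,-ambiguous-paths,-notation-incompatible-prefix".
Require Import Defs.
From HB Require Import structures.
From mathcomp Require Import all_boot all_order all_algebra.
From mathcomp Require Import ring.
From Stdlib Require Import Classical ClassicalEpsilon.
Set Implicit Arguments. Unset Strict Implicit. Unset Printing Implicit Defensive.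
Import GRing.Theory.
Local Open Scope ring_scope.
Lemma frob1 (R : comNzRingType) (p : nat) (a b : R) : prime p ->
  exists r, (a + b) ^+ p = a ^+ p + b ^+ p + p%:R * r.
Proof.
move=> pp; have p2 := prime_gt1 pp.
case: p pp p2 => [|[|p']] // pp _.
rewrite exprDn big_ord_recl big_ord_recr /=.
exists (\sum_(i < p'.+1) a ^+ (p'.+2 - (i.+1)) * b ^+ i.+1 *+ ('C(p'.+2, i.+1) %/ p'.+2)).
rewrite subn0 expr0 mulr1 bin0 mulr1n subnn expr0 mul1r binn mulr1n.
rewrite -addrA; congr (_ + _); rewrite addrC; congr (_ + _).
rewrite mulr_sumr; apply: eq_bigr => i _ /=.
rewrite mulr_natl -mulrnA divnK //; apply: prime_dvd_bin => //.
by rewrite /= ltnS ltn_ord.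
Qed.

Lemma frobK (R : comNzRingType) (p : nat) (a b : R) (k : nat) : prime p ->
  exists r, (a + b) ^+ (p ^ k) = a ^+ (p ^ k) + b ^+ (p ^ k) + p%:R * r.
Proof.
move=> pp; elim: k => [|k [r IH]].
  by exists 0; rewrite expn0 !expr1 mulr0 addr0.
rewrite expnSr !exprM IH.
have [r1 ->] := frob1 (a ^+ (p ^ k) + b ^+ (p ^ k)) (p%:R * r) pp.
have [r2 ->] := frob1 (a ^+ (p ^ k)) (b ^+ (p ^ k)) pp.
have pg := prime_gt0 pp.
exists (r2 + p%:R ^+ p.-1 * r ^+ p + r1).
have E : p%:R ^+ p = p%:R * p%:R ^+ p.-1 :> R by rewrite -exprS prednK.
rewrite exprMn E; ring.
Qed.
Lemma ideal_opp (R : comNzRingType) (I : R -> Prop) x : is_ideal I -> I x -> I (- x).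
Proof. by case=> _ _ HM Hx; rewrite -mulN1r; apply: HM. Qed.

Lemma ideal_sub (R : comNzRingType) (I : R -> Prop) x y : is_ideal I -> I x -> I y -> I (x - y).
Proof. move=> HI Hx Hy; case: (HI) => _ HA _; apply: HA => //; exact: ideal_opp. Qed.

Lemma ideal_mulr (R : comNzRingType) (I : R -> Prop) x r : is_ideal I -> I x -> I (x * r).
Proof. by case=> _ _ HM Hx; rewrite mulrC; apply: HM. Qed.

Lemma ideal_mull (R : comNzRingType) (I : R -> Prop) x r : is_ideal I -> I x -> I (r * x).
Proof. by case=> _ _ HM Hx; apply: HM. Qed.

Lemma ideal_add (R : comNzRingType) (I : R -> Prop) x y : is_ideal I -> I x -> I y -> I (x + y).
Proof. by case=> _ HA _; apply: HA. Qed.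

Lemma ideal0 (R : comNzRingType) (I : R -> Prop) : is_ideal I -> I 0.
Proof. by case. Qed.

Lemma m_prime (R : comNzRingType) (m : R -> Prop) a b : is_maximal_ideal m ->
  m (a * b) -> m a \/ m b.
Proof.
move=> [Hm H1 Hmax] Hab; case: (classic (m a)) => Ha; [by left | right].
pose J x := exists y r, m y /\ x = y + r * a.
have HJ : is_ideal J.
  split.
  - by exists 0, 0; rewrite mul0r addr0; split => //; exact: ideal0.
  - move=> x y [y1 [r1 [m1 ->]]] [y2 [r2 [m2 ->]]]; exists (y1 + y2), (r1 + r2); split.
      exact: ideal_add. by rewrite mulrDl; ring.
  - move=> r x [y1 [r1 [m1 ->]]]; exists (r * y1), (r * r1); split.
      exact: ideal_mull. by rewrite mulrDr mulrA.
case: (classic (J 1)) => HJ1.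
  case: HJ1 => y [r [my E]].
  have -> : b = y * b + r * (a * b) by rewrite mulrA -mulrDl -E mul1r.
  by apply: ideal_add => //; [exact: ideal_mulr | exact: ideal_mull].
exfalso; apply: Ha; apply: (Hmax J HJ HJ1).
  by move=> x mx; exists x, 0; rewrite mul0r addr0.
by exists 0, 1; rewrite mul1r add0r; split => //; exact: ideal0.
Qed.

Lemma m_pow (R : comNzRingType) (m : R -> Prop) x n : is_maximal_ideal m ->
  m (x ^+ n) -> m x.
Proof.
move=> Hmax; elim: n => [|n IH]; first by rewrite expr0 => H1; case: Hmax => _ /(_ H1).
by rewrite exprS => /(m_prime Hmax) [].
Qed.

Lemma not_m_T (R : comNzRingType) (m T : R -> Prop) t : is_teich m T -> is_maximal_ideal m ->
  T t -> ~ m t.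
Proof.
move=> [HU _ _ _ _] [Hm H1 _] Ht mt; case: (HU t Ht) => y E; apply: H1; rewrite -E.
exact: ideal_mulr.
Qed.

Lemma J_ideal (R : comNzRingType) (m : R -> Prop) p : is_ideal m -> is_ideal (m2pR m p).
Proof.
move=> Hm; split.
- by exists [::], 0; split => //; rewrite big_nil mulr0 addr0.
- move=> x y [s1 [r1 [H1 ->]]] [s2 [r2 [H2 ->]]]; exists (s1 ++ s2), (r1 + r2); split.
    by move=> ab; rewrite mem_cat => /orP [/H1|/H2].
  by rewrite big_cat /= mulrDr; ring.
- move=> r x [s1 [r1 [H1 ->]]]; exists [seq (r * ab.1, ab.2) | ab <- s1], (r * r1); split.
    move=> ab /mapP [ab' /H1 [h1 h2] ->] /=; split => //; exact: ideal_mull.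
  rewrite big_map mulrDr mulr_sumr; congr (_ + _); last by ring.
  by apply: eq_bigr => ab _ /=; rewrite mulrA.
Qed.

Lemma J_sub_m (R : comNzRingType) (m : R -> Prop) p : is_ideal m -> m p%:R ->
  subsetR (m2pR m p) m.
Proof.
move=> Hm Hp x [s [r [H ->]]]; apply: ideal_add => //; last exact: ideal_mulr.
elim: s H => [|ab s IH] H; first by rewrite big_nil; exact: ideal0.
rewrite big_cons; apply: ideal_add => //.
  by case: (H ab (mem_head _ _)) => h1 h2; exact: ideal_mulr.
by apply: IH => ab' Hab'; apply: H; rewrite in_cons Hab' orbT.
Qed.

Lemma J_mm (R : comNzRingType) (m : R -> Prop) p a b : m a -> m b -> m2pR m p (a * b).
Proof.
move=> ha hb; exists [:: (a, b)], 0; split.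
  by move=> ab; rewrite inE => /eqP ->.
by rewrite big_seq1 mulr0 addr0.
Qed.

Lemma J_p (R : comNzRingType) (m : R -> Prop) p r : m2pR m p (p%:R * r).
Proof. by exists [::], r; split => //; rewrite big_nil add0r. Qed.

Lemma T_exp (R : comNzRingType) (m T : R -> Prop) t n : is_teich m T -> T t -> T (t ^+ n).
Proof.
move=> [_ H1 HM _ _] Ht; elim: n => [|n IH]; first by rewrite expr0.
by rewrite exprS; apply: HM.
Qed.

Lemma T_uniq (R : comNzRingType) (m T : R -> Prop) a b : is_teich m T -> is_maximal_ideal m ->
  T a -> T b -> m (a - b) -> a = b.
Proof.
move=> HT Hmax Ha Hb mab; have na := not_m_T HT Hmax Ha.
case: (HT) => _ _ _ _ /(_ a na) [t [[Tt mt] U]].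
have mi : is_ideal m by case: Hmax.
rewrite (U a Ha); last by rewrite subrr; exact: ideal0.
by rewrite (U b Hb mab).
Qed.

Lemma teich_dec (R : comNzRingType) (m T : R -> Prop) x : is_teich m T ->
  is_ideal m -> exists t, Tbar T t /\ m (x - t).
Proof.
move=> [_ _ _ _ HD] Hm; case: (classic (m x)) => mx.
  by exists 0; split; [right | rewrite subr0].
by case: (HD x mx) => t [[Tt mt] _]; exists t; split => //; left.
Qed.

Lemma T_inj_p (R : comNzRingType) (m T : R -> Prop) p x y : is_teich m T -> is_maximal_ideal m ->
  prime p -> m p%:R -> T x -> T y -> x ^+ p = y ^+ p -> x = y.
Proof.
move=> HT Hmax pp mp Tx Ty E.
have Hm : is_ideal m by case: Hmax.
case: (HT) => _ T1 TM TI _.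
case: (TI y Ty) => y' Ty' yy'.
have Tz : T (x * y') by apply: TM.
have z1 : (x * y') ^+ p = 1 by rewrite exprMn E -exprMn yy' expr1n.
have [r Er] := frob1 (x * y' - 1) 1 pp.
rewrite subrK z1 expr1n in Er.
have : m ((x * y' - 1) ^+ p).
  have -> : (x * y' - 1) ^+ p = - (p%:R * r).
    have E2 : (x * y' - 1) ^+ p = ((x * y' - 1) ^+ p + 1 + p%:R * r) - 1 - p%:R * r by ring.
    by rewrite E2 -Er; ring.
  by apply: ideal_opp => //; apply: ideal_mulr.
move/(m_pow Hmax) => mz.
have -> : x = (x * y') * y by rewrite -mulrA [y' * y]mulrC yy' mulr1.
by rewrite (T_uniq HT Hmax Tz T1 mz) mul1r.
Qed.

Lemma T_inj_pk (R : comNzRingType) (m T : R -> Prop) p k x y : is_teich m T -> is_maximal_ideal m ->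
  prime p -> m p%:R -> T x -> T y -> x ^+ (p ^ k) = y ^+ (p ^ k) -> x = y.
Proof.
move=> HT Hmax pp mp Tx Ty; elim: k => [|k IH]; first by rewrite expn0 !expr1.
rewrite expnSr !exprM => E; apply: IH.
exact: (T_inj_p HT Hmax pp mp (T_exp _ HT Tx) (T_exp _ HT Ty) E).
Qed.

Lemma T_period (R : comNzRingType) (m T : R -> Prop) p q t : is_teich m T -> is_maximal_ideal m ->
  prime p -> m p%:R -> residue_card m q -> T t -> exists2 k, (0 < k)%N & t ^+ (p ^ k) = t.
Proof.
move=> HT Hmax pp mp [s [_ _ Hs]] Tt.
have Hm : is_ideal m by case: Hmax.
have H a : exists i, (i < q)%N /\ m (t ^+ (p ^ a) - s`_i).
  by case: (Hs (t ^+ (p ^ a))) => i ? ?; exists i.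
pose g a := proj1_sig (constructive_indefinite_description _ (H a)).
have Hg a : (g a < q)%N /\ m (t ^+ (p ^ a) - s`_(g a)) :=
  proj2_sig (constructive_indefinite_description _ (H a)).
have : ~~ uniq (map g (iota 0 q.+1)).
  apply/negP => U.
  have sub : {subset map g (iota 0 q.+1) <= iota 0 q}.
    by move=> x /mapP [a _ ->]; rewrite mem_iota add0n; case: (Hg a).
  by have := uniq_leq_size U sub; rewrite size_map !size_iota ltnn.
case/(uniqPn 0%N) => i [j [ij]]; rewrite size_map size_iota => jq.
rewrite !(nth_map 0%N) ?size_iota ?(ltn_trans ij) // !nth_iota ?(ltn_trans ij) // !add0n => gij.
have E : t ^+ (p ^ i) = t ^+ (p ^ j).
  apply: (T_uniq HT Hmax (T_exp _ HT Tt) (T_exp _ HT Tt)).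
  case: (Hg i) => _ h1; case: (Hg j) => _ h2; rewrite gij in h1.
  by have := ideal_sub Hm h1 h2; rewrite opprB addrA subrK.
exists (j - i)%N; first by rewrite subn_gt0.
apply/esym; apply: (T_inj_pk (k := i) HT Hmax pp mp Tt (T_exp _ HT Tt)).
by rewrite -exprM -expnD subnK // ltnW.
Qed.

Lemma period_mul (R : comNzRingType) p k j (t : R) : t ^+ (p ^ k) = t -> t ^+ (p ^ (k * j)) = t.
Proof.
move=> E; elim: j => [|j IH]; first by rewrite muln0 expn0 expr1.
by rewrite mulnS expnD exprM E IH.
Qed.

Lemma Tbar_exp (R : comNzRingType) (m T : R -> Prop) t n : is_teich m T -> Tbar T t -> (0 < n)%N -> Tbar T (t ^+ n).
Proof.
move=> HT [Tt|->] n0; rewrite /Tbar. left; exact: (T_exp _ HT Tt).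
by rewrite /Tbar; right; rewrite expr0n -(prednK n0).
Qed.

Lemma Tbar_mul (R : comNzRingType) (m T : R -> Prop) a b : is_teich m T -> Tbar T a -> Tbar T b -> Tbar T (a * b).
Proof.
move=> [_ _ TM _ _] [Ta|->] [Tb|->]; rewrite /Tbar; try by right; rewrite ?mul0r ?mulr0.
by left; apply: TM.
Qed.

Lemma Tbar_period (R : comNzRingType) (m T : R -> Prop) p q t : is_teich m T -> is_maximal_ideal m ->
  prime p -> m p%:R -> residue_card m q -> Tbar T t -> exists2 k, (0 < k)%N & t ^+ (p ^ k) = t.
Proof.
move=> HT Hmax pp mp rc [Tt|->]; first exact: (T_period HT Hmax pp mp rc Tt).
exists 1%N => //; rewrite expr0n expn1; case: eqP => // p0; by rewrite p0 in pp.
Qed.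

Lemma Tadd (R : comNzRingType) (m T : R -> Prop) p q t1 t2 : is_teich m T -> is_maximal_ideal m ->
  prime p -> m p%:R -> residue_card m q -> Tbar T t1 -> Tbar T t2 ->
  psi_map T (m2pR m p) (t1 + t2).
Proof.
move=> HT Hmax pp mp rc T1 T2.
have Hm : is_ideal m by case: Hmax.
have [k1 k10 E1] := Tbar_period HT Hmax pp mp rc T1.
have [k2 k20 E2] := Tbar_period HT Hmax pp mp rc T2.
have F1 := period_mul k2 E1; have F2 := period_mul k1 E2; rewrite mulnC in F2.
set P := (p ^ (k1 * k2))%N in F1 F2.
have P2 : (1 < P)%N.
  rewrite /P -{1}(expn0 p) ltn_exp2l ?prime_gt1 //.
  by rewrite muln_gt0 k10 k20.
have [t3 [T3 mu]] := teich_dec (t1 + t2) HT Hm.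
set u := t1 + t2 - t3 in mu.
have [r Er] := frobK t1 t2 (k1 * k2) pp.
have [r' Er'] := frobK t3 u (k1 * k2) pp.
rewrite -/P in Er Er'; rewrite F1 F2 in Er.
have e : t3 + u = t1 + t2 by rewrite /u addrC subrK.
rewrite e Er in Er'.
exists (t3 ^+ P), (u ^+ P + p%:R * r' - p%:R * r); split.
- exact: (Tbar_exp HT T3 (ltnW P2)).
- have HJ := J_ideal p Hm.
  apply: ideal_sub => //; last exact: J_p.
  apply: ideal_add => //; last exact: J_p.
  rewrite -(prednK (ltnW P2)) exprS; apply: J_mm => //.
  have : (0 < P.-1)%N by rewrite -ltnS prednK // ltnW.
  by case: P.-1 => // n _; rewrite exprS; apply: ideal_mulr.
- have E3 : t1 + t2 = (t1 + t2 + p%:R * r) - p%:R * r by ring.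
  by rewrite E3 Er'; ring.
Qed.

Lemma psi_add (R : comNzRingType) (m T I : R -> Prop) p q x y : is_teich m T -> is_maximal_ideal m ->
  prime p -> m p%:R -> residue_card m q -> is_ideal I -> subsetR (m2pR m p) I ->
  psi_map T I x -> psi_map T I y -> psi_map T I (x + y).
Proof.
move=> HT Hmax pp mp rc HI JI [t1 [i1 [T1 I1 ->]]] [t2 [i2 [T2 I2 ->]]].
have [t3 [j [T3 J3 E]]] := Tadd HT Hmax pp mp rc T1 T2.
exists t3, (j + i1 + i2); split => //.
  by apply: ideal_add => //; apply: ideal_add => //; apply: JI.
by rewrite addrACA E; ring.
Qed.

Lemma psi_T (R : comNzRingType) (T I : R -> Prop) t : is_ideal I -> Tbar T t -> psi_map T I t.
Proof. by move=> HI Tt; exists t, 0; split => //; [exact: ideal0 | rewrite addr0]. Qed.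

Lemma psi_I (R : comNzRingType) (T I : R -> Prop) i : I i -> psi_map T I i.
Proof. by move=> Ii; exists 0, i; split => //; [right | rewrite add0r]. Qed.

Lemma psi_opp (R : comNzRingType) (m T I : R -> Prop) p q x : is_teich m T -> is_maximal_ideal m ->
  prime p -> m p%:R -> residue_card m q -> is_ideal I -> subsetR (m2pR m p) I ->
  psi_map T I x -> psi_map T I (- x).
Proof.
move=> HT Hmax pp mp rc HI JI [t [i [Tt Ii ->]]].
have Hn n : psi_map T I (t *+ n).
  elim: n => [|n IH]; first by rewrite mulr0n; apply: psi_I; exact: ideal0.
  by rewrite mulrS; apply: (psi_add HT Hmax pp mp rc) => //; exact: psi_T.
have [t' [i' [T' I' E]]] := Hn p.-1.
exists t', (i' - p%:R * t - i); split => //.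
  apply: ideal_sub => //; apply: ideal_sub => //; apply: JI; exact: J_p.
have -> : - (t + i) = t *+ p.-1 - p%:R * t - i.
  have e : t *+ p = t + t *+ p.-1 by rewrite -mulrS prednK // prime_gt0.
  by rewrite mulr_natl e; ring.
by rewrite E; ring.
Qed.

Lemma psi_subring (R : comNzRingType) (m T I : R -> Prop) p q : is_teich m T -> is_maximal_ideal m ->
  prime p -> m p%:R -> residue_card m q -> is_ideal I -> subsetR (m2pR m p) I ->
  is_subring (psi_map T I).
Proof.
move=> HT Hmax pp mp rc HI JI; split.
- by apply: psi_T => //; left; case: HT.
- move=> x y Hx Hy; apply: (psi_add HT Hmax pp mp rc) => //.
  exact: (psi_opp HT Hmax pp mp rc).
- move=> x y [t1 [i1 [T1 I1 ->]]] [t2 [i2 [T2 I2 ->]]].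
  exists (t1 * t2), (t1 * i2 + i1 * t2 + i1 * i2); split.
  + exact: (Tbar_mul HT T1 T2).
  + by apply: ideal_add => //; [apply: ideal_add => //|]; [apply: ideal_mull|apply: ideal_mulr|apply: ideal_mulr].
  + ring.
Qed.

Lemma sr0 (R : comNzRingType) (S : R -> Prop) : is_subring S -> S 0.
Proof. by case=> H1 HB _; rewrite -(subrr 1); apply: HB. Qed.

Lemma srB (R : comNzRingType) (S : R -> Prop) x y : is_subring S -> S x -> S y -> S (x - y).
Proof. by case=> _ HB _; apply: HB. Qed.

Lemma srN (R : comNzRingType) (S : R -> Prop) x : is_subring S -> S x -> S (- x).
Proof. by move=> HS Hx; rewrite -sub0r; apply: srB => //; exact: sr0. Qed.

Lemma srD (R : comNzRingType) (S : R -> Prop) x y : is_subring S -> S x -> S y -> S (x + y).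
Proof. by move=> HS Hx Hy; rewrite -(opprK y); apply: srB => //; exact: srN. Qed.

Lemma srM (R : comNzRingType) (S : R -> Prop) x y : is_subring S -> S x -> S y -> S (x * y).
Proof. by case=> _ _ HM; apply: HM. Qed.

Lemma srn (R : comNzRingType) (S : R -> Prop) n : is_subring S -> S n%:R.
Proof.
move=> HS; elim: n => [|n IH]; first exact: sr0.
by rewrite mulrS; apply: srD => //; case: HS.
Qed.

Lemma part2 (R : comNzRingType) (m T I : R -> Prop) p q : is_teich m T -> is_maximal_ideal m ->
  prime p -> m p%:R -> residue_card m q -> codim1_ideal m p I ->
  maximal_subring_same_residue m (psi_map T I).
Proof.
move=> HT Hmax pp mp rc [HI JI Im [x0 [mx0 nIx0 Hx0]]].
have Hm : is_ideal m by case: Hmax.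
have Hsub := psi_subring HT Hmax pp mp rc HI JI.
have psiT t : Tbar T t -> psi_map T I t by exact: psi_T.
have all_in S' : is_subring S' -> subsetR (psi_map T I) S' -> S' x0 -> forall z, S' z.
  move=> HS' sub Sx0 z.
  have [tz [Tz mz]] := teich_dec z HT Hm.
  have [r [i [Ii E]]] := Hx0 _ mz.
  have [tr [Tr mr]] := teich_dec r HT Hm.
  have -> : z = tz + (tr * x0 + ((r - tr) * x0 + i)).
    by rewrite -(subrK tz z) E; ring.
  apply: srD => //; first by apply: sub; apply: psiT.
  apply: srD => //; first by apply: srM => //; apply: sub; apply: psiT.
  apply: sub; apply: psi_I; apply: ideal_add => //; apply: JI; exact: J_mm.
split.
- split => //; exists x0 => -[t [i [Tt Ii E]]].
  have mt : m t by have := ideal_sub Hm mx0 (Im _ Ii); rewrite E addrK.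
  case: Tt => [Tt|t0]; first exact: (not_m_T HT Hmax Tt).
  by apply: nIx0; rewrite E t0 add0r.
- move=> x; have [t [Tt mt]] := teich_dec x HT Hm; exists t => //; exact: psiT.
- move=> S' [HS' [w nw]] sub y Sy; apply: NNPP => npsi; apply: nw.
  apply: (all_in S' HS' sub).
  have [t [Tt mu]] := teich_dec y HT Hm.
  set u := y - t in mu.
  have Su : S' u by apply: srB => //; apply: sub; exact: psiT.
  have nIu : ~ I u.
    move=> Iu; apply: npsi; exists t, u; split => //; by rewrite /u addrC subrK.
  have [ru [iu [Iiu Eu]]] := Hx0 _ mu.
  have nmr : ~ m ru.
    move=> mr; apply: nIu; rewrite Eu; apply: ideal_add => //; apply: JI; exact: J_mm.
  case: (HT) => _ _ _ TI HD.
  have [t' [[T' mt'] _]] := HD ru nmr.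
  have [t'' T'' e] := TI t' T'.
  have -> : x0 = t'' * u - t'' * ((ru - t') * x0) - t'' * iu.
    rewrite Eu; transitivity (t' * t'' * x0); first by rewrite e mul1r.
    by ring.
  apply: srB => //; last by apply: sub; apply: psi_I; exact: (ideal_mull _ HI).
  apply: srB => //; first by apply: srM => //; apply: sub; apply: psiT; left.
  by apply: sub; apply: psi_I; apply: (ideal_mull _ HI); apply: JI; exact: J_mm.
Qed.

Definition Mk (R : comNzRingType) (m : R -> Prop) (k : nat) (x : R) :=
  exists s : seq (seq R), (forall l, l \in s -> size l = k /\ forall y, y \in l -> m y) /\
    x = \sum_(l <- s) \prod_(y <- l) y.

Lemma Mk_add (R : comNzRingType) (m : R -> Prop) k x y : Mk m k x -> Mk m k y -> Mk m k (x + y).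
Proof.
move=> [s1 [H1 ->]] [s2 [H2 ->]]; exists (s1 ++ s2); split; last by rewrite big_cat.
by move=> l; rewrite mem_cat => /orP [/H1|/H2].
Qed.

Lemma Mk_1 (R : comNzRingType) (m : R -> Prop) x : m x -> Mk m 1 x.
Proof.
move=> mx; exists [:: [:: x]]; split; last by rewrite big_seq1 big_seq1.
by move=> l; rewrite inE => /eqP ->; split => // y; rewrite inE => /eqP ->.
Qed.

Lemma Mk_mul (R : comNzRingType) (m : R -> Prop) k a x : m a -> Mk m k x -> Mk m k.+1 (a * x).
Proof.
move=> ma [s [H ->]]; exists [seq a :: l | l <- s]; split.
  move=> l /mapP [l' /H [h1 h2] ->]; split; first by rewrite /= h1.
  by move=> y; rewrite inE => /orP [/eqP ->|/h2].
by rewrite big_map mulr_sumr; apply: eq_bigr => l _; rewrite big_cons.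
Qed.

Lemma Mk_m (R : comNzRingType) (m : R -> Prop) k x : is_ideal m -> (0 < k)%N -> Mk m k x -> m x.
Proof.
move=> Hm k0 [s [H ->]]; elim: s H => [|l s IH] H; first by rewrite big_nil; exact: ideal0.
rewrite big_cons; apply: ideal_add => //; last by apply: IH => l' hl; apply: H; rewrite in_cons hl orbT.
have [h1 h2] := H l (mem_head _ _); clear H IH.
case: l h1 h2 => [|y l] /= h1 h2; first by rewrite -h1 in k0.
by rewrite big_cons; apply: (ideal_mulr _ Hm); apply: h2; rewrite mem_head.
Qed.

Lemma Mk_nil (R : comNzRingType) (m : R -> Prop) n x :
  (forall s : seq R, size s = n -> (forall x, x \in s -> m x) -> \prod_(x <- s) x = 0) ->
  Mk m n x -> x = 0.
Proof.
move=> Hn [s [H ->]]; rewrite big1_seq // => l /andP [_ hl].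
by have [h1 h2] := H l hl; apply: Hn.
Qed.

Lemma frattini (R : comNzRingType) (m S : R -> Prop) p : is_ideal m -> m p%:R ->
  nilpotent_ideal m -> is_subring S -> same_residue_field m S ->
  (forall x, exists s j, [/\ S s, m2pR m p j & x = s + j]) -> forall x, S x.
Proof.
move=> Hm mp [n Hn] HS HSR HJ.
have Rk k : (0 < k)%N -> forall x, exists s, S s /\ Mk m k (x - s).
  elim: k => [//|k IH] _ x.
  case: (posnP k) => [->|k0].
    by case: (HSR x) => s Ss ms; exists s; split => //; exact: Mk_1.
  have IH' := IH k0.
  have Hpair a b : m a -> m b -> exists s, S s /\ Mk m k.+1 (a * b - s).
    move=> ma mb; have [a' [Sa' Ma]] := IH' a; have [b' [Sb' Mb]] := IH' b.
    exists (a' * b'); split; first exact: srM.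
    have mb' : m (b' ) \/ True by right.
    have -> : a * b - a' * b' = a * (b - b') + (b - (b - b')) * (a - a') by ring.
    apply: Mk_add; apply: Mk_mul => //.
    by apply: ideal_sub => //; exact: (Mk_m Hm k0 Mb).
  have [s0 [j [Ss0 [L [r [HL ->]]] ->]]] := HJ x.
  have [sL [SsL ML]] : exists s, S s /\ Mk m k.+1 (\sum_(ab <- L) ab.1 * ab.2 - s).
    elim: L HL => [|ab L IHL] HL.
      by exists 0; split; [exact: sr0 | exists [::]; split => //; rewrite !big_nil subr0].
    have [s1 [Ss1 M1]] : exists s, S s /\ Mk m k.+1 (\sum_(ab <- L) ab.1 * ab.2 - s).
      by apply: IHL => ab' h; apply: HL; rewrite in_cons h orbT.
    have [h1 h2] := HL ab (mem_head _ _).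
    have [s2 [Ss2 M2]] := Hpair _ _ h1 h2.
    exists (s2 + s1); split; first exact: srD.
    rewrite big_cons; have -> : ab.1 * ab.2 + \sum_(ab0 <- L) ab0.1 * ab0.2 - (s2 + s1) =
      (ab.1 * ab.2 - s2) + (\sum_(ab0 <- L) ab0.1 * ab0.2 - s1) by ring.
    exact: Mk_add.
  have [r' [Sr' Mr]] := IH' r.
  exists (s0 + (sL + p%:R * r')); split.
    by apply: srD => //; apply: srD => //; apply: srM => //; exact: srn.
  have -> : s0 + (\sum_(ab <- L) ab.1 * ab.2 + p%:R * r) - (s0 + (sL + p%:R * r')) =
     (\sum_(ab <- L) ab.1 * ab.2 - sL) + p%:R * (r - r') by ring.
  by apply: Mk_add => //; exact: Mk_mul.
case: n Hn => [|n] Hn.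
  by exfalso; have := Hn [::] erefl (fun x (h : x \in [::]) => False_ind _ (notF h)); rewrite big_nil; apply/eqP; exact: oner_neq0.
move=> x; have [s [Ss Ms]] := Rk n.+1 erefl x.
by have := Mk_nil Hn Ms => /eqP; rewrite subr_eq0 => /eqP ->.
Qed.

Lemma J_pow (R : comNzRingType) (m : R -> Prop) p u n : is_ideal m -> m u -> (1 < n)%N -> m2pR m p (u ^+ n).
Proof.
move=> Hm mu; case: n => [|[|n]] // _; rewrite exprS; apply: J_mm => //.
by rewrite exprS; apply: (ideal_mulr _ Hm).
Qed.

Lemma sr_exp (R : comNzRingType) (S : R -> Prop) x n : is_subring S -> S x -> S (x ^+ n).
Proof.
move=> HS Sx; elim: n => [|n IH]; first by rewrite expr0; case: HS.
by rewrite exprS; apply: srM.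
Qed.

Lemma part13 (R : comNzRingType) (m T S : R -> Prop) p q : is_teich m T -> is_maximal_ideal m ->
  prime p -> m p%:R -> residue_card m q -> nilpotent_ideal m ->
  maximal_subring_same_residue m S ->
  codim1_ideal m p (phi_map m p S) /\ eqsetR (psi_map T (phi_map m p S)) S.
Proof.
move=> HT Hmax pp mp rc nil [[HS [w nw]] HSR Smax].
have Hm : is_ideal m by case: Hmax.
have HJ := J_ideal p Hm.
have Jm := J_sub_m Hm mp.
have JS : subsetR (m2pR m p) S.
  pose SJ x := exists s j, [/\ S s, m2pR m p j & x = s + j].
  have HSJ : is_subring SJ.
    split.
    - by exists 1, 0; split => //; [case: HS | exact: ideal0 | rewrite addr0].
    - move=> x y [s1 [j1 [S1 J1 ->]]] [s2 [j2 [S2 J2 ->]]]; exists (s1 - s2), (j1 - j2); split.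
      + exact: srB.
      + exact: ideal_sub.
      + ring.
    - move=> x y [s1 [j1 [S1 J1 ->]]] [s2 [j2 [S2 J2 ->]]].
      exists (s1 * s2), (s1 * j2 + j1 * s2 + j1 * j2); split.
      + exact: srM.
      + by apply: ideal_add => //; [apply: ideal_add => //|]; [apply: ideal_mull|apply: ideal_mulr|apply: ideal_mulr].
      + ring.
  case: (classic (exists x, ~ SJ x)) => [nSJ|allSJ].
    move=> j Jj; apply: (Smax SJ (conj HSJ nSJ)).
      by move=> s Ss; exists s, 0; split => //; [exact: ideal0 | rewrite addr0].
    by exists 0, j; split => //; [exact: sr0 | rewrite add0r].
  exfalso; apply: nw; apply: (frattini Hm mp nil HS HSR) => x.
  by apply: NNPP => h; apply: allSJ; exists x.
have phiE x : phi_map m p S x <-> m x /\ S x.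
  split.
    move=> [s [j [ms Ss Jj ->]]]; split; first by apply: ideal_add => //; apply: Jm.
    by apply: srD => //; apply: JS.
  by move=> [mx Sx]; exists x, 0; split => //; [exact: ideal0 | rewrite addr0].
have TS t : T t -> S t.
  move=> Tt; case: (HSR t) => s Ss mts.
  have [k k0 Ek] := T_period HT Hmax pp mp rc Tt.
  have [r Er] := frobK s (t - s) k pp.
  rewrite addrC subrK Ek in Er.
  rewrite Er; apply: srD => //; last by apply: JS; exact: J_p.
  apply: srD => //; first exact: sr_exp.
  apply: JS; apply: J_pow => //.
  by rewrite -{1}(expn0 p) ltn_exp2l ?prime_gt1.
split.
-
  have [x0 [mx0 nSx0]] : exists x0, m x0 /\ ~ S x0.
    apply: NNPP => h; apply: nw.
    case: (HSR w) => s Ss ms.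
    have -> : w = s + (w - s) by rewrite addrC subrK.
    apply: srD => //; apply: NNPP => h2; apply: h; by exists (w - s).
  pose A x := exists s1 s2, [/\ S s1, S s2 & x = s1 + s2 * x0].
  have HA : is_subring A.
    split.
    - by exists 1, 0; split => //; [case: HS | exact: sr0 | rewrite mul0r addr0].
    - move=> x y [a1 [b1 [A1 B1 ->]]] [a2 [b2 [A2 B2 ->]]]; exists (a1 - a2), (b1 - b2); split.
      + exact: srB.
      + exact: srB.
      + ring.
    - move=> x y [a1 [b1 [A1 B1 ->]]] [a2 [b2 [A2 B2 ->]]].
      exists (a1 * a2 + b1 * b2 * (x0 * x0)), (a1 * b2 + b1 * a2); split.
      + apply: srD => //; first exact: srM.
        by apply: srM => //; [exact: srM | apply: JS; exact: J_mm].
      + by apply: srD; [ | exact: srM | exact: srM].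
      + ring.
  have allA : forall y, A y.
    apply: NNPP => h.
    have nA : exists x, ~ A x by apply: NNPP => h2; apply: h => y; apply: NNPP => h3; apply: h2; exists y.
    apply: nSx0; apply: (Smax A (conj HA nA)).
      by move=> s Ss; exists s, 0; split => //; [exact: sr0 | rewrite mul0r addr0].
    by exists 0, 1; split => //; [exact: sr0 | case: HS | rewrite mul1r add0r].
  split.
  + split.
    * by apply/phiE; split; [exact: ideal0 | exact: sr0].
    * move=> x y /phiE [mx Sx] /phiE [my Sy]; apply/phiE; split; [exact: ideal_add | exact: srD].
    * move=> r x /phiE [mx Sx]; apply/phiE; split; first exact: ideal_mull.
      have [a [b [Sa Sb ->]]] := allA r.
      rewrite mulrDl; apply: srD => //; first exact: srM.
      by rewrite -mulrA; apply: srM => //; apply: JS; exact: J_mm.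
  + by move=> j Jj; apply/phiE; split; [exact: Jm | exact: JS].
  + by move=> x /phiE [].
  + exists x0; split => //; first by move/phiE => [].
    move=> y my; have [a [b [Sa Sb E]]] := allA y.
    exists b, a; split; last by rewrite E addrC.
    apply/phiE; split => //.
    have -> : a = y - b * x0 by rewrite E addrK.
    by apply: ideal_sub => //; exact: ideal_mull.
-
  move=> x; split.
    move=> [t [i [Tt /phiE [mi Si] ->]]]; apply: srD => //.
    by case: Tt => [/TS|->] //; exact: sr0.
  move=> Sx; have [t [Tt mt]] := teich_dec x HT Hm.
  exists t, (x - t); split => //; last by rewrite addrC subrK.
  apply/phiE; split => //; apply: srB => //.
  by case: Tt => [/TS|->] //; exact: sr0.
Qed.

Lemma part4 (R : comNzRingType) (m T I : R -> Prop) p : is_teich m T -> is_maximal_ideal m ->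
  m p%:R -> codim1_ideal m p I -> eqsetR (phi_map m p (psi_map T I)) I.
Proof.
move=> HT Hmax mp [HI JI Im _] x; have Hm : is_ideal m by case: Hmax.
split.
  move=> [s [j [ms [t [i [Tt Ii Es]]] Jj ->]]]; apply: ideal_add => //; last exact: JI.
  have mt : m t by have := ideal_sub Hm ms (Im _ Ii); rewrite Es addrK.
  case: Tt => [Tt|t0]; first by case: (not_m_T HT Hmax Tt).
  by rewrite Es t0 add0r.
move=> Ix; exists x, 0; split.
- exact: Im.
- exact: psi_I.
- exact: (ideal0 (J_ideal p Hm)).
- by rewrite addr0.
Qed.

Theorem theorem28 (R : comNzRingType) (m : R -> Prop) (p q : nat)
  (T : R -> Prop)
  (Hstar : cond_star m p q)
  (HT : is_teich m T)
  (HV : exists x, m x /\ ~ m2pR m p x) :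
  [/\ (forall S, maximal_subring_same_residue m S -> codim1_ideal m p (phi_map m p S)),
      (forall I, codim1_ideal m p I -> maximal_subring_same_residue m (psi_map T I)),
      (forall S, maximal_subring_same_residue m S -> eqsetR (psi_map T (phi_map m p S)) S) &
      (forall I, codim1_ideal m p I -> eqsetR (phi_map m p (psi_map T I)) I)].
Proof.
case: Hstar => [[Hmax _] pp [N _ Hch] rc nil].
have Hm : is_ideal m by case: Hmax.
have mp : m p%:R.
  apply: (m_pow (n := N) Hmax).
  by rewrite -natrX; move/(_ (p ^ N)%N): Hch => [_ /(_ (dvdnn _)) /eqP ->]; exact: ideal0.
split.
- by move=> S HS; case: (part13 HT Hmax pp mp rc nil HS).
- by move=> I HI; exact: (part2 HT Hmax pp mp rc HI).
- by move=> S HS; case: (part13 HT Hmax pp mp rc nil HS).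
- by move=> I HI; exact: (part4 HT Hmax mp HI).
Qed.
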